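(* For every $K^{\#}$-formula $\phi$ there exists a GNN $\mathcal{A}$ with $[[\mathcal{A}]]=[[\phi]]$ whose number of layers is $O(\mathrm{md}(\phi))$, where $\mathrm{md}(\phi)$ is the modal depth of $\phi$.
   Context: Graphs: a (labeled directed) graph is $G=(V,E,\ell)$ with $V$ finite, $E\subseteq V\times V$, and $\ell$ mapping each vertex to a truth valuation of atomic propositions; a pointed graph is $(G,u)$ with $u\in V$. GNNs: a GNN over input propositions $p_1,\dots,p_k$ is given by $L$ layers, layer $t$ specified by integer matrices $C_t,A_t\in\mathbb{Z}^{d_{t-1}\times d_t}$ and integer vector $b_t\in\mathbb{Z}^{d_t}$ ($d_0=k$), and a classifier $\mathit{cls}(x)=1$ iff $\sum_i a_ix_i\ge1$ with integer $a_i$. States: $x_0(u)=(\ell(u)(p_1),\dots,\ell(u)(p_k))$, $x_t(u)=\boldsymbol\sigma(x_{t-1}(u)C_t+(\sum_{v:(u,v)\in E}x_{t-1}(v))A_t+b_t)$ with $\sigma(z)=\max(0,\min(1,z))$ componentwise. $[[\mathcal{A}]]$ is the set of pointed graphs $(G,u)$ with $\mathit{cls}(x_L(u))=1$. Logic $K^{\#}$: formulas $\phi ::= p \mid \neg\phi \mid \phi\lor\phi \mid \xi\ge 0$, expressions $\xi ::= c \mid 1_\phi \mid \#\phi \mid \xi+\xi \mid c\times\xi$ ($c\in\mathbb{Z}$), with $[[1_\phi]]_{G,u}\in\{0,1\}$ the truth value of $\phi$ at $u$ and $[[\#\phi]]_{G,u}$ the number of successors of $u$ satisfying $\phi$; $(G,u)\models\xi\ge0$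 iff $[[\xi]]_{G,u}\ge0$; $[[\phi]]$ is the set of pointed graphs satisfying $\phi$. Modal depth: $\mathrm{md}(p)=\mathrm{md}(c)=0$, $\mathrm{md}(\neg\phi)=\mathrm{md}(1_\phi)=\mathrm{md}(\phi)$, $\mathrm{md}(\phi\lor\psi)=\max(\mathrm{md}(\phi),\mathrm{md}(\psi))$, $\mathrm{md}(\xi\ge0)=\mathrm{md}(c\times\xi)=\mathrm{md}(\xi)$, $\mathrm{md}(\#\phi)=\mathrm{md}(\phi)+1$, $\mathrm{md}(\xi_1+\xi_2)=\max(\mathrm{md}(\xi_1),\mathrm{md}(\xi_2))$. *)

(* Defs.v *)
From HB Require Import structures.
From mathcomp Require Import all_boot all_order all_algebra.
Set Implicit Arguments. Unset Strict Implicit. Unset Printing Implicit Defensive.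
Import Order.TTheory GRing.Theory Num.Theory.
Local Open Scope ring_scope.

(* ---------- Graphs ----------
   A labeled directed graph: vertex finType T, edge relation E : rel T,
   labelling lab : T -> nat -> bool (atomic propositions are indexed by nat). *)

Inductive kform : Type :=
  | FProp : nat -> kform
  | FNeg  : kform -> kform
  | FOr   : kform -> kform -> kform
  | FGe   : kexpr -> kform
with kexpr : Type :=
  | EConst : int -> kexpr
  | EInd   : kform -> kexpr
  | ECount : kform -> kexpr
  | EPlus  : kexpr -> kexpr -> kexpr
  | EScale : int -> kexpr -> kexpr.

Section Semantics.
Variables (T : finType) (E : rel T) (lab : T -> nat -> bool).

Fixpoint sat (phi : kform) (u : T) {struct phi} : bool :=
  match phi with
  | FProp p => lab u p
  | FNeg psi => ~~ sat psi u
  | FOr psi1 psi2 => sat psi1 u || sat psi2 u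
  | FGe xi => (0 <= val xi u)%R
  end
with val (xi : kexpr) (u : T) {struct xi} : int :=
  match xi with
  | EConst c => c
  | EInd psi => (sat psi u)%:R
  | ECount psi => (\sum_(v : T | E u v && sat psi v) 1%N)%:R
  | EPlus xi1 xi2 => val xi1 u + val xi2 u
  | EScale c xi1 => c * val xi1 u
  end.
End Semantics.

Fixpoint md (phi : kform) : nat :=
  match phi with
  | FProp _ => 0
  | FNeg psi => md psi
  | FOr psi1 psi2 => maxn (md psi1) (md psi2)
  | FGe xi => mde xi
  end
with mde (xi : kexpr) : nat :=
  match xi with
  | EConst _ => 0
  | EInd psi => md psi
  | ECount psi => (md psi).+1
  | EPlus xi1 xi2 => maxn (mde xi1) (mde xi2)
  | EScale _ xi1 => mde xi1
  end.

Definition sigma (z : int) : int := Num.max 0 (Num.min 1 z).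

Inductive layers : nat -> nat -> Type :=
  | LNil  : forall d, layers d d
  | LCons : forall d0 d1 d2, 'M[int]_(d0, d1) -> 'M[int]_(d0, d1) -> 'rV[int]_d1 ->
            layers d1 d2 -> layers d0 d2.

Fixpoint nlayers d0 d2 (L : layers d0 d2) : nat :=
  match L with
  | LNil _ => 0
  | LCons _ _ _ _ _ _ L' => (nlayers L').+1
  end.

Record GNN : Type := MkGNN {
  gk : nat;
  gin : 'I_gk -> nat;
  gout : nat;
  glayers : layers gk gout;
  gcls : 'I_gout -> int
}.

Definition num_layers (A : GNN) : nat := nlayers (glayers A).

Section GNNSemantics.
Variables (T : finType) (E : rel T) (lab : T -> nat -> bool).

Fixpoint run d0 d2 (L : layers d0 d2) : (T -> 'rV[int]_d0) -> (T -> 'rV[int]_d2) :=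
  match L in layers a c return (T -> 'rV[int]_a) -> (T -> 'rV[int]_c) with
  | LNil _ => fun x => x
  | LCons _ _ _ C A b L' => fun x =>
      run L' (fun u => map_mx sigma (x u *m C + (\sum_(v : T | E u v) x v) *m A + b))
  end.

Definition input_state (A : GNN) (u : T) : 'rV[int]_(gk A) :=
  \row_(i < gk A) ((lab u (@gin A i))%:R : int).

Definition accepts (A : GNN) (u : T) : Prop :=
  (1 <= \sum_(i < gout A) @gcls A i * run (glayers A) (input_state A) u 0 i)%R.
End GNNSemantics.

(* Main.v *)
Require Import Defs.
From HB Require Import structures.
From mathcomp Require Import all_boot all_order all_algebra.
From mathcomp Require Import ring lra zify.
Set Implicit Arguments. Unset Strict Implicit. Unset Printing Implicit Defensive.
Import Order.TTheory GRing.Theory Num.Theory.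
Local Open Scope ring_scope.

Fixpoint keqf (a b : kform) : bool :=
  match a, b with
  | FProp p, FProp q => p == q
  | FNeg a, FNeg b => keqf a b
  | FOr a1 a2, FOr b1 b2 => keqf a1 b1 && keqf a2 b2
  | FGe x, FGe y => keqe x y
  | _, _ => false
  end
with keqe (x y : kexpr) : bool :=
  match x, y with
  | EConst c, EConst d => c == d
  | EInd a, EInd b => keqf a b
  | ECount a, ECount b => keqf a b
  | EPlus x1 x2, EPlus y1 y2 => keqe x1 y1 && keqe x2 y2
  | EScale c x, EScale d y => (c == d) && keqe x y
  | _, _ => false
  end.

Scheme kform_mut := Induction for kform Sort Prop
  with kexpr_mut := Induction for kexpr Sort Prop.

Lemma eqf_sound : forall a b, keqf a b -> a = b.
Proof.
apply (@kform_mut (fun a : kform => forall b, keqf a b -> a = b)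
                  (fun x : kexpr => forall y, keqe x y -> x = y)).
- by move=> p [] //= q /eqP ->.
- by move=> a IH [] //= b /IH ->.
- by move=> a1 IH1 a2 IH2 [] //= b1 b2 /andP[/IH1 -> /IH2 ->].
- by move=> x IH [] //= y /IH ->.
- by move=> c [] //= d /eqP ->.
- by move=> a IH [] //= b /IH ->.
- by move=> a IH [] //= b /IH ->.
- by move=> x1 IH1 x2 IH2 [] //= y1 y2 /andP[/IH1 -> /IH2 ->].
- by move=> c x IH [] //= d y /andP[/eqP -> /IH ->].
Qed.

Lemma eqf_refl : forall a, keqf a a.
Proof.
apply (@kform_mut (fun a : kform => keqf a a) (fun x : kexpr => keqe x x)) => //=.
- by move=> ? -> ? ->.
- by move=> ? -> ? ->.
- by move=> c x ->; rewrite eqxx.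
Qed.

Lemma eqfP : Equality.axiom keqf.
Proof.
move=> a b; apply: (iffP idP); first exact: eqf_sound.
by move=> ->; apply: eqf_refl.
Qed.

HB.instance Definition _ := hasDecEq.Build kform eqfP.

Fixpoint subf (a : kform) : seq kform :=
  match a with
  | FProp p => [:: FProp p]
  | FNeg b => FNeg b :: subf b
  | FOr b c => FOr b c :: subf b ++ subf c
  | FGe x => FGe x :: subfe x
  end
with subfe (x : kexpr) : seq kform :=
  match x with
  | EConst _ => [::]
  | EInd a => subf a
  | ECount a => subf a
  | EPlus x y => subfe x ++ subfe y
  | EScale _ x => subfe x
  end.

Lemma subf_self a : a \in subf a.
Proof. by case: a => * /=; rewrite in_cons eqxx. Qed.

Lemma subf_trans : forall a c, c \in subf a -> {subset subf c <= subf a}.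
Proof.
apply (@kform_mut (fun a : kform => forall c, c \in subf a -> {subset subf c <= subf a})
                  (fun x : kexpr => forall c, c \in subfe x -> {subset subf c <= subfe x})).
- by move=> p c; rewrite inE => /eqP ->.
- move=> a IH c; rewrite inE => /orP[/eqP -> //|/IH H] d /H.
  by rewrite /= inE => ->; rewrite orbT.
- move=> a IHa b IHb c; rewrite inE => /orP[/eqP -> //|].
  rewrite mem_cat => /orP[/IHa H|/IHb H] d /H; rewrite /= inE mem_cat => ->;
  by rewrite ?orbT.
- move=> x IH c; rewrite inE => /orP[/eqP -> //|/IH H] d /H.
  by rewrite /= inE => ->; rewrite orbT.
- by [].
- by [].
- by [].
- move=> x IHx y IHy c; rewrite mem_cat => /orP[/IHx H|/IHy H] d /H;
  by rewrite /= mem_cat => ->; rewrite ?orbT.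
- by move=> ? x IH c /IH.
Qed.

Definition isProp (c : kform) : bool := if c is FProp _ then true else false.

Section Trees.
Variable S : seq kform.
Local Notation n := (size S).

Definition desc := ('rV[int]_n * 'rV[int]_n * int)%type.

Inductive dt (A : Type) : Type := Lf of A | Nd of desc & dt A & dt A.

Fixpoint dbind A B (t : dt A) (k : A -> dt B) : dt B :=
  match t with Lf a => k a | Nd h l r => Nd h (dbind l k) (dbind r k) end.

Fixpoint evdt A (beta : desc -> bool) (t : dt A) : A :=
  match t with Lf a => a | Nd h l r => if beta h then evdt beta l else evdt beta r end.

Fixpoint nodes A (t : dt A) : seq desc :=
  match t with Lf _ => [::] | Nd h l r => h :: nodes l ++ nodes r end.

Lemma evdt_bind A B beta (t : dt A) (k : A -> dt B) :
  evdt beta (dbind t k) = evdt beta (k (evdt beta t)).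
Proof. by elim: t => //= h l IHl r IHr; case: (beta h). Qed.

Lemma evdt_ext A b1 b2 (t : dt A) :
  {in nodes t, b1 =1 b2} -> evdt b1 t = evdt b2 t.
Proof.
elim: t => //= h l IHl r IHr H.
rewrite H ?inE ?eqxx // IHl ?IHr // => z hz; apply: H;
by rewrite inE mem_cat hz ?orbT.
Qed.

Definition erow (c : kform) : 'rV[int]_n := \row_(j < n) ((j : nat) == index c S)%:R.
Definition dadd (d1 d2 : desc) : desc := (d1.1.1 + d2.1.1, d1.1.2 + d2.1.2, d1.2 + d2.2).
Definition dscale (c : int) (d : desc) : desc := (c *: d.1.1, c *: d.1.2, c * d.2).
Definition dconst (c : int) : desc := (0, 0, c).

Fixpoint ftree (a : kform) : dt bool :=
  match a with
  | FProp p => Nd (erow (FProp p), 0, -1) (Lf true) (Lf false)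
  | FNeg b => dbind (ftree b) (fun v => Lf (~~ v))
  | FOr b c => dbind (ftree b) (fun v => if v then Lf true else ftree c)
  | FGe xi => dbind (etree xi) (fun d => Nd d (Lf true) (Lf false))
  end
with etree (xi : kexpr) : dt desc :=
  match xi with
  | EConst c => Lf (dconst c)
  | EInd b => dbind (ftree b) (fun v => Lf (dconst v%:R))
  | ECount b => Lf (0, erow b, 0)
  | EPlus x y => dbind (etree x) (fun d1 => dbind (etree y) (fun d2 => Lf (dadd d1 d2)))
  | EScale c x => dbind (etree x) (fun d => Lf (dscale c d))
  end.

Definition evalh (d : desc) (x s : 'rV[int]_n) : int :=
  \sum_(i < n) (x 0 i * d.1.1 0 i + s 0 i * d.1.2 0 i) + d.2.

Lemma evalh_add d1 d2 x s : evalh (dadd d1 d2) x s = evalh d1 x s + evalh d2 x s.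
Proof.
rewrite /evalh /dadd /= addrACA -big_split /=; congr (_ + _).
by apply: eq_bigr => i _; rewrite !mxE; ring.
Qed.

Lemma evalh_scale c d x s : evalh (dscale c d) x s = c * evalh d x s.
Proof.
rewrite /evalh /dscale /= mulrDr mulr_sumr; congr (_ + _).
by apply: eq_bigr => i _; rewrite !mxE; ring.
Qed.

Lemma evalh_const c x s : evalh (dconst c) x s = c.
Proof. by rewrite /evalh /dconst /= big1 ?add0r // => i _; rewrite !mxE !mulr0 addr0. Qed.

Lemma sum_erow c (f : 'I_n -> int) (i : 'I_n) : (i : nat) = index c S ->
  \sum_(j < n) f j * erow c 0 j = f i.
Proof.
move=> hi; rewrite (bigD1 i) //= big1 ?addr0.
  by rewrite mxE -hi eqxx mulr1.
by move=> j hj; rewrite mxE -hi; case: eqP => [/val_inj/eqP|]; rewrite ?(negbTE hj) ?mulr0.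
Qed.

End Trees.

Section Correct.
Variable S : seq kform.
Local Notation n := (size S).
Variables (T : finType) (E : rel T) (lab : T -> nat -> bool) (l : nat) (u : T).
Variables (x s : 'rV[int]_n).
Hypothesis Hx : forall c (i : 'I_n), (i : nat) = index c S -> c \in S -> isProp c ->
  x 0 i = (sat E lab c u)%:R.
Hypothesis Hs : forall c (i : 'I_n), (i : nat) = index c S -> c \in S -> (md c < l)%N ->
  s 0 i = (\sum_(v : T | E u v && sat E lab c v) 1%N)%:R.

Definition betau (h : desc S) : bool := 0 <= evalh h x s.

Lemma tree_ok : forall a, {subset subf a <= S} -> (md a <= l)%N ->
  evdt betau (ftree S a) = sat E lab a u.
Proof.
apply (@kform_mut (fun a : kform => {subset subf a <= S} -> (md a <= l)%N ->
  evdt betau (ftree S a) = sat E lab a u)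
  (fun xi : kexpr => {subset subfe xi <= S} -> (mde xi <= l)%N ->
  evalh (evdt betau (etree S xi)) x s = Defs.val E lab xi u)).
- move=> p hS _ /=.
  have hin : FProp p \in S by apply: hS; rewrite inE.
  have hlt := hin; rewrite -index_mem in hlt.
  rewrite /betau /evalh /=.
  under eq_bigr => j _ do rewrite [X in s 0 j * X]mxE mulr0 addr0.
  rewrite (@sum_erow S (FProp p) _ (Ordinal hlt)) //.
  rewrite (Hx (c := FProp p) (i := Ordinal hlt)) //=.
  by case: (lab u p); rewrite ?subrr ?lexx // sub0r oppr_ge0.
- move=> a IH hS hm /=; rewrite evdt_bind /= IH //.
  by move=> z hz; apply: hS; rewrite /= inE hz orbT.
- move=> a IHa b IHb hS /= hm; rewrite evdt_bind IHa.
  + case: (sat E lab a u) => //=; apply: IHb.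
    * by move=> z hz; apply: hS; rewrite /= inE mem_cat hz !orbT.
    * by move: hm; rewrite geq_max => /andP[].
  + by move=> z hz; apply: hS; rewrite /= inE mem_cat hz !orbT.
  + by move: hm; rewrite geq_max => /andP[].
- move=> xi IH hS /= hm; rewrite evdt_bind /= /betau IH //.
  + by case: (0 <= _).
  + by move=> z hz; apply: hS; rewrite /= inE hz orbT.
- by move=> c _ _ /=; rewrite evalh_const.
- move=> a IH hS /= hm; rewrite evdt_bind /= evalh_const IH //.
- move=> a IH hS /= hm.
  have hin : a \in S by apply: hS; apply: subf_self.
  have hlt := hin; rewrite -index_mem in hlt.
  rewrite /evalh /= addr0.
  under eq_bigr => j _ do rewrite [X in x 0 j * X]mxE mulr0 add0r.
  by rewrite (@sum_erow S a _ (Ordinal hlt)) // (Hs (c := a) (i := Ordinal hlt)).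
- move=> x1 IH1 x2 IH2 hS /= hm; rewrite evdt_bind evdt_bind /= evalh_add IH1 ?IH2 //.
  + by move=> z hz; apply: hS; rewrite /= mem_cat hz ?orbT.
  + by move: hm; rewrite geq_max => /andP[].
  + by move=> z hz; apply: hS; rewrite /= mem_cat hz ?orbT.
  + by move: hm; rewrite geq_max => /andP[].
- move=> c x1 IH hS /= hm; rewrite evdt_bind /= evalh_scale IH //.
Qed.

End Correct.

Lemma sigma_step (z : int) : sigma (z + 1) = (0 <= z)%R%:R.
Proof. rewrite /sigma; case: (leP 0 z) => h /=; lia. Qed.

Lemma sigma_bool (b : bool) : sigma b%:R = b%:R.
Proof. by case: b. Qed.

Lemma sigma_cnt (N : nat) : sigma (1 - N%:R) = (N == 0)%N%:R.
Proof. rewrite /sigma; case: N => [|N] /=; lia. Qed.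

Section Stage.
Variable S : seq kform.
Local Notation n := (size S).
Hypothesis HS : forall c, c \in S -> {subset subf c <= S}.

Definition d0 : desc S := dconst S 0.
Definition D : seq (desc S) := flatten [seq nodes (ftree S c) | c <- S].
Local Notation m := (size D).
Local Notation F := {ffun 'I_m -> bool}.
Local Notation d2 := #|F|.

Definition C1 : 'M[int]_(n, m) := \matrix_(i, j) (nth d0 D j).1.1 0 i.
Definition A1 : 'M[int]_(n, m) := \matrix_(i, j) (nth d0 D j).1.2 0 i.
Definition b1 : 'rV[int]_m := \row_j ((nth d0 D j).2 + 1).
Definition C2 : 'M[int]_(m, d2) := \matrix_(j, k) (if (enum_val k : F) j then 1 else -1).
Definition A2 : 'M[int]_(m, d2) := 0.
Definition b2 : 'rV[int]_d2 := \row_k (1 - (\sum_j ((enum_val k : F) j : nat))%N%:R).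
Definition bof (be : F) (h : desc S) : bool := [exists j : 'I_m, (nth d0 D j == h) && be j].
Definition gfun (i : 'I_n) (be : F) : bool := evdt (bof be) (ftree S (nth (FProp 0) S i)).
Definition C3 : 'M[int]_(d2, n) := \matrix_(k, i) (gfun i (enum_val k))%:R.
Definition A3 : 'M[int]_(d2, n) := 0.
Definition b3 : 'rV[int]_n := 0.

Fixpoint rep (t : nat) : layers n n :=
  match t with
  | 0 => LNil n
  | t'.+1 => LCons C1 A1 b1 (LCons C2 A2 b2 (LCons C3 A3 b3 (rep t')))
  end.

Lemma nlayers_rep t : nlayers (rep t) = (3 * t)%N.
Proof. elim: t => //= t ->; lia. Qed.

Definition inv (T : finType) (E : rel T) (lab : T -> nat -> bool) (l : nat)
  (x : T -> 'rV[int]_n) :=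
  forall u (i : 'I_n), ((md (nth (FProp 0) S i) < l)%N || isProp (nth (FProp 0) S i)) ->
    x u 0 i = (sat E lab (nth (FProp 0) S i) u)%:R.

Section StageOk.
Variables (T : finType) (E : rel T) (lab : T -> nat -> bool) (l : nat).
Variable x : T -> 'rV[int]_n.
Hypothesis Hinv : inv E lab l x.

Definition lay d d' (C A : 'M[int]_(d, d')) (b : 'rV[int]_d') (y : T -> 'rV[int]_d) :=
  fun u => map_mx sigma (y u *m C + (\sum_(v : T | E u v) y v) *m A + b).

Definition Sx u := \sum_(v : T | E u v) x v.
Definition be0 u : F := [ffun j : 'I_m => betau (x u) (Sx u) (nth d0 D j)].

Lemma lay1 u (j : 'I_m) : lay C1 A1 b1 x u 0 j = (be0 u j)%:R.
Proof.
have eC : forall i, C1 i j = (nth d0 D j).1.1 0 i by move=> i; rewrite mxE.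
have eA : forall i, A1 i j = (nth d0 D j).1.2 0 i by move=> i; rewrite mxE.
rewrite /lay !mxE ffunE -/(Sx u) addrA sigma_step /betau /evalh big_split /=.
have -> : \sum_(j0 < n) Sx u 0 j0 * A1 j0 j = \sum_(i < n) Sx u 0 i * (nth d0 D j).1.2 0 i.
  by apply: eq_bigr => i _; rewrite eA.
have -> : \sum_(j0 < n) x u 0 j0 * C1 j0 j = \sum_(i < n) x u 0 i * (nth d0 D j).1.1 0 i.
  by apply: eq_bigr => i _; rewrite eC.
by [].
Qed.

Definition y1 := lay C1 A1 b1 x.
Definition y2 := lay C2 A2 b2 y1.
Definition y3 := lay C3 A3 b3 y2.

Lemma lay2 u (k : 'I_d2) : y2 u 0 k = ((enum_val k : F) == be0 u)%:R.
Proof.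
rewrite /y2 /lay /A2 mulmx0 addr0 !mxE.
have eC : forall j, C2 j k = if (enum_val k : F) j then 1 else -1 by move=> j; rewrite mxE.
set ev := (enum_val k : F).
have -> : \sum_(j < m) y1 u 0 j * C2 j k = \sum_(j < m) ((be0 u j)%:R * (if ev j then 1 else -1) : int).
  by apply: eq_bigr => j _; rewrite eC /y1 lay1.
rewrite natr_sum.
have Hs : \sum_(j < m) ((be0 u j)%:R * (if ev j then 1 else -1) : int) =
   \sum_(j < m) ((ev j : nat)%:R : int) - \sum_(j < m) ((ev j != be0 u j : nat)%:R : int).
  rewrite -sumrB; apply: eq_bigr => j _.
  by case: (ev j); case: (be0 u j).
rewrite Hs (_ : forall a b : int, a - b + (1 - a) = 1 - b); last by move=> a b; ring.
rewrite -natr_sum sigma_cnt; congr (_ %:R).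
case: (boolP (ev == be0 u)) => [/eqP ->|hne].
  by rewrite big1 // => j _; rewrite eqxx.
case: eqP => // /eqP; rewrite sum_nat_eq0 => /forallP H.
move/eqP: hne => hne; exfalso; apply: hne.
by apply/ffunP => j; move: (H j); case: (ev j); case: (be0 u j).
Qed.

Lemma lay3 u (i : 'I_n) : y3 u 0 i = (gfun i (be0 u))%:R.
Proof.
rewrite /y3 /lay /A3 /b3 mulmx0 !addr0 !mxE.
rewrite (bigD1 (enum_rank (be0 u))) //= big1 ?addr0.
  by rewrite lay2 enum_rankK eqxx mul1r mxE enum_rankK sigma_bool.
move=> k hk; rewrite lay2.
case: eqP => [he|]; last by rewrite mul0r.
by move: hk; rewrite -he enum_valK eqxx.
Qed.

Lemma stage_ok : inv E lab l.+1 y3.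
Proof.
move=> u i hP; rewrite lay3; congr (_ %:R).
set c := nth (FProp 0) S i.
have cS : c \in S by apply: mem_nth.
have hmd : (md c <= l)%N by move: hP; rewrite -/c ltnS => /orP[//|]; case: (c).
rewrite /gfun -/c.
rewrite (@evdt_ext _ _ _ (betau (x u) (Sx u))); last first.
  move=> h hh.
  have hD : h \in D by apply/flatten_mapP; exists c.
  apply/existsP/idP => [[j /andP[/eqP <-]]|hb]; first by rewrite ffunE.
  have hl : (index h D < m)%N by rewrite index_mem.
  by exists (Ordinal hl); rewrite /= nth_index // eqxx ffunE /= nth_index.
congr (nat_of_bool _).
apply: (@tree_ok S T E lab l u (x u) (Sx u)); last 2 first.
- by apply: HS.
- by [].
- move=> c' i' hi c'S hp; rewrite Hinv; first by rewrite hi nth_index.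
  by rewrite hi nth_index // hp orbT.
- move=> c' i' hi c'S hlt; rewrite /Sx summxE.
  rewrite natr_sum big_mkcondr /=; apply: eq_bigr => v _.
  rewrite Hinv; first by rewrite hi nth_index //; case: (sat E lab c' v).
  by rewrite hi nth_index // hlt.
Qed.
End StageOk.
End Stage.

Lemma rep_ok (S : seq kform) (HS : forall c, c \in S -> {subset subf c <= S})
  (T : finType) (E : rel T) lab t : forall l x, @inv S T E lab l x ->
  @inv S T E lab (l + t) (run E (rep S t) x).
Proof.
elim: t => [|t IH] l x Hx /=; first by rewrite addn0.
rewrite -addSnnS; apply: IH.
exact: (@stage_ok S HS T E lab l x Hx).
Qed.

Lemma main_aux :
  exists c : nat, forall phi : kform, exists A : GNN,
    (num_layers A <= c * (md phi).+1)%N /\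
    (forall (T : finType) (E : rel T) (lab : T -> nat -> bool) (u : T),
        accepts E lab A u <-> sat E lab phi u).
Proof.
exists 3%N => phi.
pose S := subf phi.
have HS : forall c, c \in S -> {subset subf c <= S} by move=> c; apply: subf_trans.
pose gin (i : 'I_(size S)) := if nth (FProp 0) S i is FProp p then p else 0%N.
pose gcls (i : 'I_(size S)) : int := ((i : nat) == index phi S)%:R.
exists (MkGNN gin (rep S (md phi).+1) gcls); split.
  by rewrite /num_layers nlayers_rep.
move=> T E lab u.
have H0 : @inv S T E lab 0 (input_state lab (MkGNN gin (rep S (md phi).+1) gcls)).
  move=> v i; rewrite orFb mxE /gin /=; case: (nth (FProp 0) S i) => //.
have H1 := @rep_ok S HS T E lab (md phi).+1 0 _ H0.
have pS : phi \in S by apply: subf_self.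
have hl : (index phi S < size S)%N by rewrite index_mem.
rewrite /accepts /= (bigD1 (Ordinal hl)) //= big1 ?addr0.
  rewrite /gcls /= eqxx mul1r H1 /=.
    by rewrite nth_index //; case: (sat E lab phi u).
  by rewrite nth_index // ltnSn.
move=> j hj; rewrite /gcls; case: eqP => [he|]; last by rewrite mul0r.
by move: hj; rewrite (_ : j = Ordinal hl) ?eqxx //; apply: val_inj.
Qed.

Local Close Scope ring_scope.

Theorem mainTheorem3 :
  exists c : nat, forall phi : kform, exists A : GNN,
    (num_layers A <= c * (md phi).+1)%N /\
    (forall (T : finType) (E : rel T) (lab : T -> nat -> bool) (u : T),
        accepts E lab A u <-> sat E lab phi u).
Proof. exact: main_aux. Qed.
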